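(* Let $r$ be a positive integer, let $G$ be a finite simple graph, and let $S$ be an $r$-net of $G$. Let $H$ be the induced subgraph of $G$ obtained by deleting the vertices of $S$, and suppose $H$ has at least one vertex. Then $\lambda_1(H)^{2r} \le \lambda_1(G)^{2r} - 1$.
   Context: An $r$-net in a graph $G$ is a subset $S$ of the vertex set of $G$ such that every vertex of $G$ lies within (graph) distance at most $r$ of some vertex of $S$. For a graph $F$, $\lambda_1(F)$ denotes the largest eigenvalue of the adjacency matrix of $F$. *)

(* Defs.v *)
From HB Require Import structures.
From mathcomp Require Import all_boot all_order all_algebra.
From mathcomp Require Import reals.
Set Implicit Arguments. Unset Strict Implicit. Unset Printing Implicit Defensive.
Import Order.TTheory GRing.Theory Num.Theory.
Local Open Scope ring_scope.

Definition simple_graph (T : finType) (e : rel T) : Prop :=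
  symmetric e /\ irreflexive e.

Definition within_dist (T : finType) (e : rel T) (r : nat) (u v : T) : Prop :=
  exists p : seq T, [/\ path e u p, last u p = v & (size p <= r)%N].

Definition is_rnet (T : finType) (e : rel T) (r : nat) (S : {set T}) : Prop :=
  forall v : T, exists2 s, s \in S & within_dist e r s v.

(* adjacency matrix of the subgraph induced on A (vertices indexed by enum A) *)
Definition adj_mx (R : realType) (T : finType) (e : rel T) (A : {set T})
  : 'M[R]_#|A| :=
  \matrix_(i, j) (e (enum_val i) (enum_val j))%:R.

Definition is_lambda1 (R : realType) (n : nat) (M : 'M[R]_n) (l : R) : Prop :=
  eigenvalue M l /\ forall a : R, eigenvalue M a -> a <= l.

(* Main.v *)
Require Import Defs.
From HB Require Import structures.
From mathcomp Require Import all_boot all_order all_algebra.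
From mathcomp Require Import reals.
From mathcomp Require Import complex zify.
Set Implicit Arguments. Unset Strict Implicit. Unset Printing Implicit Defensive.
Import Order.TTheory GRing.Theory Num.Theory.
Local Open Scope ring_scope.
Local Open Scope sesquilinear_scope.

Section Spec.
Variable C : numClosedFieldType.

Lemma spec_form n (A : 'M[C]_n) (k : nat) (L : C) : A \is hermsymmx ->
  (forall i, (spectral_diag A 0 i) ^+ k <= L) ->
  forall z : 'rV[C]_n, (z *m A ^+ k *m z^t*) 0 0 <= L * (z *m z^t*) 0 0.
Proof.
move=> hA hd z.
set P := spectralmx A; set d := spectral_diag A.
have PU : P \is unitarymx by apply: spectral_unitarymx.
have eA : A = P^t* *m diag_mx d *m P.
  rewrite -invmx_unitary //; apply/orthomx_spectralP.
  exact: hermitian_normalmx.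
have PP : P *m P^t* = 1%:M by apply/unitarymxP.
have eAk' : forall k, A ^+ k = P^t* *m diag_mx (\row_i (d 0 i ^+ k)) *m P.
  elim => [|k' IH].
    rewrite expr0.
    have -> : diag_mx (\row_i d 0 i ^+ 0) = 1%:M :> 'M[C]_n.
      by apply/matrixP => i j; rewrite !mxE expr0.
    by rewrite mulmx1 -[P^t*]mul1mx mulmxKtV.
  rewrite exprS IH -mulmxE eA !mulmxA mulmxtVK // -!mulmxA; congr (_ *m _).
  rewrite !mulmxA; congr (_ *m _); apply/matrixP => i j.
  rewrite mul_diag_mx !mxE exprS; case: eqP => [->|_]; by rewrite ?mulr1n ?mulr0n ?mulr0.
pose dk := \row_i (d 0 i ^+ k).
have eAk := eAk' k.
set w := z *m P^t*.
have e1 : z *m A ^+ k *m z^t* = w *m diag_mx dk *m w^t*.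
  rewrite eAk /w !trmx_mul !map_mxM trmxCK !mulmxA //.
have e2 : z *m z^t* = w *m w^t*.
  by rewrite /w !trmx_mul !map_mxM trmxCK !mulmxA mulmxKtV.
rewrite e1 e2 !mxE mulr_sumr; apply: ler_sum => j _.
rewrite mul_mx_diag !mxE [_ * (d 0 j ^+ k)]mulrC -mulrA.
by apply: ler_wpM2r; [apply: mul_conjC_ge0 | apply: hd].
Qed.

End Spec.

Section RB.
Variable R : realType.
Local Notation f := (real_complex R).

Lemma creal (c : R[i]) : c \is Num.real -> c = (complex.Re c)%:C%C.
Proof.
case: c => a b; rewrite realE => /orP[]; rewrite lecE /= => /andP[/eqP h _]; 
by [rewrite h | rewrite -h].
Qed.

Lemma fconj (x : R) : ((x%:C)%C)^* = (x%:C)%C.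
Proof.
apply: conj_Creal; case: (lerP 0 x) => h.
  by apply: ger0_real; rewrite ler0c.
by apply: ler0_real; rewrite -[0 : R[i]]/((0:R)%:C)%C lecR ltW.
Qed.

Lemma form_map n (M : 'M[R]_n) (z : 'rV[R]_n) :
  (map_mx f z *m map_mx f M *m (map_mx f z)^t*) 0 0 = ((z *m M *m z^T) 0 0)%:C%C.
Proof.
have -> : (map_mx f z)^t* = map_mx f z^T by apply/matrixP => i j; rewrite !mxE fconj.
by rewrite -!map_mxM mxE.
Qed.

Lemma map_pow n (M : 'M[R]_n) k : map_mx f (M ^+ k) = (map_mx f M) ^+ k.
Proof.
elim: k => [|k IH]; last by rewrite !exprS -!mulmxE map_mxM IH.
by rewrite !expr0; apply/matrixP => i j; rewrite !mxE rmorphMn.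
Qed.


Lemma form_map0 n (z : 'rV[R]_n) :
  (map_mx f z *m (map_mx f z)^t*) 0 0 = ((z *m z^T) 0 0)%:C%C.
Proof.
have -> : (map_mx f z)^t* = map_mx f z^T by apply/matrixP => i j; rewrite !mxE fconj.
by rewrite -!map_mxM mxE.
Qed.

Lemma freal (x : R) : ((x%:C)%C : R[i]) \is Num.real.
Proof. by rewrite -[X in X \is _]fconj; apply/CrealP; rewrite !fconj. Qed.

Lemma vv_ge0 n (v : 'rV[R]_n) : 0 <= (v *m v^T) 0 0.
Proof. by rewrite mxE; apply: sumr_ge0 => j _; rewrite mxE -expr2 sqr_ge0. Qed.

Lemma real_bound n (B : 'M[R]_n) (l : R) (k : nat) :
  B^T = B -> (forall i j, 0 <= B i j) ->
  (forall a, eigenvalue B a -> a <= l) ->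
  forall z : 'rV[R]_n,
    (z *m B ^+ (2*k) *m z^T) 0 0 <= l ^+ (2*k) * (z *m z^T) 0 0.
Proof.
move=> Bsym Bpos Bl.
set A := map_mx f B.
have hA : A \is hermsymmx.
  apply: realsym_hermsym.
    apply/is_hermitianmxP; rewrite expr0 scale1r map_mx_id //.
    by rewrite /A map_trmx Bsym.
  by apply/mxOverP => i j; rewrite mxE freal.
set P := spectralmx A; set d := spectral_diag A.
have PU : P \is unitarymx by apply: spectral_unitarymx.
have eA : A = P^t* *m diag_mx d *m P.
  rewrite -invmx_unitary //; apply/orthomx_spectralP.
  exact: hermitian_normalmx.
have PP : P *m P^t* = 1%:M by apply/unitarymxP.
have dreal i : d 0 i = (complex.Re (d 0 i))%:C%C.
  apply: creal; exact: (mxOverP (hermitian_spectral_diag_real hA)).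
have eigA i : eigenvalue A (d 0 i).
  apply/eigenvalueP; exists (row i P).
    have : P *m A = diag_mx d *m P by rewrite eA !mulmxA PP mul1mx.
    move/(congr1 (row i)); rewrite row_mul => ->.
    by apply/rowP => j; rewrite mul_diag_mx !mxE.
  apply/eqP => h0; have := congr1 (row i) PP.
  rewrite row_mul h0 mul0mx => /rowP /(_ i); rewrite !mxE eqxx mulr1n => /esym/eqP.
  by rewrite oner_eq0.
have eigB i : eigenvalue B (complex.Re (d 0 i)).
  move: (eigA i); rewrite [X in eigenvalue _ X]dreal !eigenvalue_root_char.
  by rewrite -map_char_poly fmorph_root.
have Ray1 (z : 'rV[R]_n) : (z *m B *m z^T) 0 0 <= l * (z *m z^T) 0 0.
  have := @spec_form _ n A 1 (l%:C)%C hA _ (map_mx f z).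
  rewrite expr1 form_map form_map0 -rmorphM lecR; apply => i.
  by rewrite expr1 dreal lecR; apply: Bl.
have absB i : `|complex.Re (d 0 i)| <= l.
  set a := complex.Re (d 0 i).
  have [v hv vn0] := eigenvalueP (eigB i).
  pose u := map_mx Num.norm v.
  have vv0 := vv_ge0 v.
  have h1 : `|a| * (v *m v^T) 0 0 <= (u *m B *m u^T) 0 0.
    rewrite -(ger0_norm vv0) -normrM.
    have -> : a * (v *m v^T) 0 0 = (v *m B *m v^T) 0 0.
      by rewrite hv -scalemxAl [in RHS]mxE.
    rewrite !mxE; apply: le_trans (ler_norm_sum _ _ _) _; apply: ler_sum => j _.
    rewrite !mxE normrM; apply: ler_wpM2r; first exact: normr_ge0.
    apply: le_trans (ler_norm_sum _ _ _) _; apply: ler_sum => k' _.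
    by rewrite !mxE normrM (ger0_norm (Bpos k' j)).
  have h2 : (u *m u^T) 0 0 = (v *m v^T) 0 0.
    rewrite !mxE; apply: eq_bigr => j _; rewrite !mxE -normrM ger0_norm //.
    by rewrite -expr2 sqr_ge0.
  have vpos : 0 < (v *m v^T) 0 0.
    rewrite lt_def vv0 andbT; apply: contra vn0 => /eqP h; apply/eqP/rowP => j.
    move: h; rewrite mxE => h.
    have hnn : forall j, true -> 0 <= v 0 j * v^T j 0.
      by move=> j' _; rewrite mxE -expr2 sqr_ge0.
    have := psumr_eq0P hnn h (i:=j) isT.
    by rewrite !mxE => /eqP; rewrite mulf_eq0 orbb => /eqP ->.
  rewrite -(ler_pM2r vpos); apply: le_trans h1 _; rewrite -h2; exact: Ray1.
move=> z.
have := @spec_form _ n A (2*k) (l ^+ (2*k))%:C%C hA _ (map_mx f z).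
rewrite -map_pow form_map form_map0 -rmorphM lecR; apply => i.
rewrite dreal -rmorphXn lecR.
have -> : complex.Re (d 0 i) ^+ (2 * k) = `|complex.Re (d 0 i)| ^+ (2 * k).
  by rewrite !exprM real_normK // num_real.
apply: lerXn2r; rewrite ?nnegrE // ; first by apply: le_trans (absB i).
Qed.

End RB.

Section Comb.
Variable R : realType.
Variable T : finType.
Variable e : rel T.

Fixpoint K (A : {set T}) (k : nat) (u v : T) : R :=
  if k is k'.+1 then \sum_(t in A) (e u t)%:R * K A k' t v else (u == v)%:R.

Lemma K_ge0 A k u v : 0 <= K A k u v.
Proof.
elim: k u => [|k IH] u /=; first exact: ler0n.
by apply: sumr_ge0 => t _; apply: mulr_ge0 => //; exact: ler0n.
Qed.

Lemma sub_sum (A : {set T}) (F : T -> R) : (forall t, 0 <= F t) ->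
  \sum_(t in A) F t <= \sum_(t in [set: T]) F t.
Proof.
move=> F0; rewrite big_mkcond [X in _ <= X]big_mkcond; apply: ler_sum => t _.
by rewrite in_setT; case: ifP.
Qed.

Lemma le_single (A : {set T}) (F : T -> R) t : t \in A -> (forall t, 0 <= F t) ->
  F t <= \sum_(t' in A) F t'.
Proof.
move=> tA F0; rewrite (bigD1 t) //= lerDl; exact: sumr_ge0.
Qed.

Lemma K_mono A k u v : K A k u v <= K [set: T] k u v.
Proof.
elim: k u => [|k IH] u //=.
apply: le_trans (sub_sum _ _); last by move=> t; apply: mulr_ge0 => //; exact: K_ge0.
by apply: ler_sum => t _; apply: ler_wpM2l => //.
Qed.

Lemma K_walk1 p u : path e u p -> 1 <= K [set: T] (size p) u (last u p).
Proof.
elim: p u => [|t p IH] u /=; first by rewrite eqxx.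
move=> /andP[eut pp].
have F0 : forall t', 0 <= (e u t')%:R * K [set: T] (size p) t' (last t p).
  by move=> t'; apply: mulr_ge0 => //; exact: K_ge0.
have := le_single (in_setT t) F0.
apply: le_trans; rewrite eut mul1r; exact: IH.
Qed.

Lemma K_walk2 (H : {set T}) p u : path e u p -> has (fun t => t \notin H) p ->
  K H (size p) u (last u p) + 1 <= K [set: T] (size p) u (last u p).
Proof.
elim: p u => [|t p IH] u //=.
move=> /andP[eut pp] hp.
set v := last t p.
have F0 : forall t', 0 <= (e u t')%:R * K [set: T] (size p) t' v.
  by move=> t'; apply: mulr_ge0 => //; exact: K_ge0.
case: (boolP (t \in H)) => tH.
  have hp' : has (fun t => t \notin H) p by move: hp; rewrite tH.
  apply: (le_trans _ (sub_sum H F0)).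
  rewrite (bigD1 t) //= [X in _ <= X](bigD1 t) //= eut !mul1r -addrA [_ + 1]addrC addrA.
  apply: lerD; first exact: IH.
  by apply: ler_sum => t' _; apply: ler_wpM2l => //; exact: K_mono.
rewrite [X in _ <= X](bigD1 t) ?in_setT //= eut mul1r addrC.
apply: lerD; last exact: K_walk1.
rewrite big_mkcond [X in _ <= X]big_mkcond; apply: ler_sum => t' _.
rewrite in_setT /=; case: ifP => t'H.
  have -> : t' != t by apply: contraNneq tH => <-.
  by apply: ler_wpM2l => //; exact: K_mono.
by case: ifP.
Qed.

Fixpoint bounce (a s : T) (j : nat) : seq T :=
  if j is j'.+1 then a :: s :: bounce a s j' else [::].

Lemma bounce_path a s j : e s a -> e a s -> path e s (bounce a s j).
Proof. by move=> h1 h2; elim: j => //= j ->; rewrite h1 h2. Qed.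

Lemma bounce_last a s j : last s (bounce a s j) = s.
Proof. by elim: j. Qed.

Lemma bounce_size a s j : size (bounce a s j) = (2 * j)%N.
Proof. elim: j => //= j ->; lia. Qed.

Lemma closed_walk r S u : simple_graph e -> is_rnet e r S -> u \in ~: S ->
  exists p, [/\ path e u p, last u p = u, size p = (2 * r)%N &
                has (fun t => t \notin ~: S) p].
Proof.
move=> [esym _] rnet uH.
have [s sS [q [pq lq szq]]] := rnet u.
case: q pq lq szq => [|a q'] pq lq szq.
  by move: uH; rewrite /= in lq; rewrite -lq in_setC sS.
set q := a :: q' in pq lq szq *.
have esa : e s a by case/andP: pq.
pose p := rev (belast s q) ++ bounce a s (r - size q) ++ q.
have lr : last u (rev (belast s q)) = s by rewrite /= rev_cons last_rcons.
exists p; split.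
  have p1 : path e u (rev (belast s q)).
    rewrite -[X in path e X]lq rev_path.
    by rewrite (@eq_path _ _ e) // => x y; rewrite esym.
  have p2 : path e s (bounce a s (r - size q)) by apply: bounce_path; rewrite // esym.
  by rewrite /p !cat_path p1 lr p2 bounce_last pq.
- by rewrite /p !last_cat lr bounce_last.
- rewrite /p !size_cat size_rev size_belast bounce_size; lia.
- apply/hasP; exists s; last by rewrite in_setC sS.
  by rewrite /p mem_cat mem_rev /= in_cons eqxx.
Qed.

Lemma adjX (A : {set T}) k (i j : 'I_#|A|) :
  (adj_mx R e A ^+ k) i j = K A k (enum_val i) (enum_val j).
Proof.
elim: k i j => [|k IH] i j.
  by rewrite expr0 !mxE /= (inj_eq enum_val_inj).
rewrite exprS -mulmxE mxE /= [in RHS]big_enum_val; apply: eq_bigr => l _.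
by rewrite IH mxE.
Qed.

Lemma qform n (M : 'M[R]_n) (z : 'rV[R]_n) :
  (z *m M *m z^T) 0 0 = \sum_i \sum_j z 0 i * M i j * z 0 j.
Proof.
rewrite mxE exchange_big; apply: eq_bigr => j _; rewrite !mxE mulr_suml.
by apply: eq_bigr.
Qed.

Lemma qvec (A : {set T}) k (F : T -> R) :
  let z := \row_(i < #|A|) F (enum_val i) in
  (z *m (adj_mx R e A) ^+ k *m z^T) 0 0 =
  \sum_(u in A) \sum_(v in A) F u * K A k u v * F v.
Proof.
rewrite /= qform [in RHS]big_enum_val; apply: eq_bigr => i _; rewrite [in RHS]big_enum_val.
by apply: eq_bigr => j _; rewrite adjX !mxE.
Qed.

Lemma qnorm (A : {set T}) (F : T -> R) :
  let z := \row_(i < #|A|) F (enum_val i) in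
  (z *m z^T) 0 0 = \sum_(u in A) F u * F u.
Proof.
by rewrite /= mxE [in RHS]big_enum_val; apply: eq_bigr => i _; rewrite !mxE.
Qed.

End Comb.

Local Close Scope sesquilinear_scope.

Lemma vv_pos (R : realType) n (v : 'rV[R]_n) : v != 0 -> 0 < (v *m v^T) 0 0.
Proof.
move=> vn0; rewrite lt_def vv_ge0 andbT; apply: contra vn0 => /eqP h; apply/eqP/rowP => j.
move: h; rewrite mxE => h.
have hnn : forall j, true -> 0 <= v 0 j * v^T j 0.
  by move=> j' _; rewrite mxE -expr2 sqr_ge0.
have := psumr_eq0P hnn h (i:=j) isT.
by rewrite !mxE => /eqP; rewrite mulf_eq0 orbb => /eqP ->.
Qed.

Lemma eig_pow (R : realType) n (M : 'M[R]_n) (y : 'rV[R]_n) a k :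
  y *m M = a *: y -> y *m M ^+ k = a ^+ k *: y.
Proof.
move=> hy; elim: k => [|k IH].
  by rewrite !expr0 scale1r; apply/rowP => j; rewrite mul_mx_scalar scale1r.
by rewrite exprSr -mulmxE mulmxA IH -scalemxAl hy scalerA -exprSr.
Qed.

Theorem lemma6 (R : realType) (T : finType) (e : rel T) (r : nat)
    (S : {set T}) (lG lH : R) :
  simple_graph e -> (0 < r)%N -> is_rnet e r S ->
  (0 < #|~: S|)%N ->
  is_lambda1 (adj_mx R e [set: T]) lG ->
  is_lambda1 (adj_mx R e (~: S)) lH ->
  lH ^+ (2 * r) <= lG ^+ (2 * r) - 1.
Proof.
move=> sg r0 rnet Hne [eGl eGmax] [eHl eHmax].
have [esym _] := sg.
set H := ~: S.
have [y hy yn0] := eigenvalueP eHl.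
pose g u := \sum_(i < #|H|) (enum_val i == u)%:R * `|y 0 i|.
have gH i : g (enum_val i) = `|y 0 i|.
  rewrite /g (bigD1 i) //= eqxx mul1r big1 ?addr0 // => j ji.
  by rewrite (inj_eq enum_val_inj) (negbTE ji) mul0r.
have g0 u : u \notin H -> g u = 0.
  move=> uH; rewrite /g big1 // => i _; case: eqP => [ei|]; last by rewrite mul0r.
  by move: (enum_valP i); rewrite ei (negbTE uH).
have gge0 u : 0 <= g u.
  by apply: sumr_ge0 => i _; apply: mulr_ge0 => //; exact: ler0n.
pose xG := \row_(i < #|[set: T]|) g (enum_val i).
pose xH := \row_(i < #|H|) g (enum_val i).
have ny : (xH *m xH^T) 0 0 = (y *m y^T) 0 0.
  rewrite !mxE; apply: eq_bigr => j _; rewrite !mxE gH -normrM ger0_norm //.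
  by rewrite -expr2 sqr_ge0.
have nG : (xG *m xG^T) 0 0 = (xH *m xH^T) 0 0.
  rewrite !qnorm big_mkcond [in RHS]big_mkcond; apply: eq_bigr => u _.
  rewrite in_setT; case: ifP => // uH; by rewrite g0 ?uH // mul0r.
have ypos := vv_pos yn0.
have Gsym : (adj_mx R e [set: T])^T = adj_mx R e [set: T].
  by apply/matrixP => i j; rewrite !mxE esym.
have Gpos : forall i j, 0 <= adj_mx R e [set: T] i j.
  by move=> i j; rewrite mxE ler0n.
have UB := real_bound r Gsym Gpos eGmax xG.
rewrite nG ny in UB.
have LB1 : (xH *m adj_mx R e H ^+ (2 * r) *m xH^T) 0 0 + (y *m y^T) 0 0 <=
           (xG *m adj_mx R e [set: T] ^+ (2 * r) *m xG^T) 0 0.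
  rewrite !qvec -ny qnorm -big_split /=.
  have F0 : forall u, 0 <= \sum_(v in [set: T]) g u * K R e [set: T] (2 * r) u v * g v.
    by move=> u; apply: sumr_ge0 => v _; apply: mulr_ge0 => //; apply: mulr_ge0 => //; exact: K_ge0.
  apply: (le_trans _ (sub_sum _ F0)); apply: ler_sum => u uH.
  have F1 : forall v, 0 <= g u * K R e [set: T] (2 * r) u v * g v.
    by move=> v; apply: mulr_ge0 => //; apply: mulr_ge0 => //; exact: K_ge0.
  apply: (le_trans _ (sub_sum _ F1)).
  rewrite (bigD1 u) //= [X in _ <= X](bigD1 u) //= addrAC.
  apply: lerD.
    have [p [pp lp sp hp]] := closed_walk sg rnet uH.
    have := K_walk2 R pp hp; rewrite lp sp => hK.
    have e1 : forall a b : R, a * b * a + a * a = a * (b + 1) * a by move=> a b; rewrite mulrDr mulr1 mulrDl.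
    by rewrite e1; apply: ler_wpM2r => //; apply: ler_wpM2l.
  rewrite big_mkcond [X in _ <= X]big_mkcond; apply: ler_sum => v _; rewrite in_setT /=.
  case: (v != u); rewrite ?andbT ?andbF //; case: (v \in H) => //. 
  by apply: ler_wpM2r => //; apply: ler_wpM2l => //; exact: K_mono.
have LB2 : lH ^+ (2 * r) * (y *m y^T) 0 0 <= (xH *m adj_mx R e H ^+ (2 * r) *m xH^T) 0 0.
  have l0 : 0 <= lH ^+ (2 * r) by rewrite exprM exprn_ge0 // sqr_ge0.
  rewrite -(ger0_norm (mulr_ge0 l0 (vv_ge0 y))).
  have -> : lH ^+ (2 * r) * (y *m y^T) 0 0 = (y *m adj_mx R e H ^+ (2 * r) *m y^T) 0 0.
    by rewrite (eig_pow _ hy) -scalemxAl [in RHS]mxE.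
  rewrite !qform; apply: le_trans (ler_norm_sum _ _ _) _; apply: ler_sum => i _.
  apply: le_trans (ler_norm_sum _ _ _) _; apply: ler_sum => j _.
  rewrite !mxE !gH !normrM (ger0_norm (x := (adj_mx R e H ^+ (2 * r)) i j)) //.
  by rewrite adjX K_ge0.
have := le_trans (lerD LB2 (lexx _)) (le_trans LB1 UB).
rewrite -{2}[(y *m y^T) 0 0]mul1r -mulrDl (ler_pM2r ypos) => h.
by rewrite lerBrDr.
Qed.
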